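(* Let $f\colon K\to R$ be a homomorphism of (nonunital) rings. Assume that $f$ is either left t-unital or right t-unital. Then the ring $R$ is t-unital.
   Context: Rings are associative, not necessarily unital, and ring homomorphisms need not preserve units. A ring $R$ is t-unital if the multiplication map $R\otimes_R R\to R$ is an isomorphism. A left $K$-module $M$ is t-unital if $K\otimes_K M\to M$, $k\otimes m\mapsto km$, is an isomorphism, and a right $K$-module $N$ is t-unital if $N\otimes_K K\to N$ is an isomorphism. The homomorphism $f$ is left (resp. right) t-unital if $R$, with the left (resp. right) $K$-module structure induced by $f$, is a t-unital left (resp. right) $K$-module. *)

(* Defs.v *)
From HB Require Import structures.
From mathcomp Require Import all_boot all_order all_algebra.
Set Implicit Arguments. Unset Strict Implicit. Unset Printing Implicit Defensive.
Import Order.TTheory GRing.Theory Num.Theory.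
Local Open Scope ring_scope.

Record nuring := NURing {
  nu_carrier :> zmodType;
  nu_mul : nu_carrier -> nu_carrier -> nu_carrier;
  nu_mulA : forall x y z, nu_mul x (nu_mul y z) = nu_mul (nu_mul x y) z;
  nu_mulDl : forall x y z, nu_mul (x + y) z = nu_mul x z + nu_mul y z;
  nu_mulDr : forall x y z, nu_mul x (y + z) = nu_mul x y + nu_mul x z
}.

Definition nu_hom (K R : nuring) (f : K -> R) : Prop :=
  (forall x y, f (x + y) = f x + f y) /\
  (forall x y, f (nu_mul x y) = nu_mul (f x) (f y)).

(* The free abelian group on A * B is
   represented by formal integer combinations (seq (int * (A * B))), two
   combinations being equal in the free group iff all coefficients agree. *)
Section Tensor.
Variables (K : Type) (A B C : zmodType).
Variables (ra : A -> K -> A) (la : K -> B -> B) (mu : A -> B -> C).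

Definition fsum := seq (int * (A * B)).

Definition fcoef (s : fsum) (p : A * B) : int :=
  \sum_(q <- s | q.2 == p) q.1.

Definition fscale (n : int) (s : fsum) : fsum :=
  map (fun q => (n * q.1, q.2)) s.

(* The subgroup of the free abelian group generated by the biadditivity and
   K-balancedness relations; the tensor product is the quotient by it. *)
Inductive tensor_rel : fsum -> Prop :=
| trel_addl a1 a2 b :
    tensor_rel [:: (1, (a1 + a2, b)); (-1, (a1, b)); (-1, (a2, b))]
| trel_addr a b1 b2 :
    tensor_rel [:: (1, (a, b1 + b2)); (-1, (a, b1)); (-1, (a, b2))]
| trel_bal a k b :
    tensor_rel [:: (1, (ra a k, b)); (-1, (a, la k b))]
| trel_zero : tensor_rel [::]
| trel_add s t : tensor_rel s -> tensor_rel t -> tensor_rel (s ++ t)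
| trel_scale n s : tensor_rel s -> tensor_rel (fscale n s)
| trel_eq s t : (forall p, fcoef s p = fcoef t p) ->
    tensor_rel s -> tensor_rel t.

Definition fmu (s : fsum) : C := \sum_(q <- s) (mu q.2.1 q.2.2) *~ q.1.

(* The induced map A (x)_K B -> C, a (x) b |-> mu a b, is an isomorphism:
   it is surjective, and its kernel is trivial, i.e. the kernel of the map on
   the free group is (contained in) the relation subgroup. *)
Definition tensor_map_iso : Prop :=
  (forall c : C, exists s : fsum, fmu s = c) /\
  (forall s : fsum, fmu s = 0 -> tensor_rel s).

End Tensor.

Definition tunital_ring (R : nuring) : Prop :=
  @tensor_map_iso R R R R (@nu_mul R) (@nu_mul R) (@nu_mul R).

(* Left K-module M (action act) is t-unital: K (x)_K M -> M iso. *)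
Definition tunital_lmod (K : nuring) (M : zmodType) (act : K -> M -> M) : Prop :=
  @tensor_map_iso K K M M (@nu_mul K) act act.

(* Right K-module N (action act) is t-unital: N (x)_K K -> N iso. *)
Definition tunital_rmod (K : nuring) (N : zmodType) (act : N -> K -> N) : Prop :=
  @tensor_map_iso K N K N act (@nu_mul K) act.

Definition left_tunital_hom (K R : nuring) (f : K -> R) : Prop :=
  tunital_lmod (fun (k : K) (r : R) => nu_mul (f k) r).

Definition right_tunital_hom (K R : nuring) (f : K -> R) : Prop :=
  tunital_rmod (fun (r : R) (k : K) => nu_mul r (f k)).

(* Main.v *)
Require Import Defs.
From mathcomp Require Import all_boot all_order all_algebra ring.
Set Implicit Arguments. Unset Strict Implicit. Unset Printing Implicit Defensive.
Import GRing.Theory. Local Open Scope ring_scope.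

Section Gen.
Variables (K : Type) (A B : zmodType) (ra : A -> K -> A) (la : K -> B -> B).
Local Notation T := (tensor_rel ra la).

Lemma fcoef_nil p : fcoef (A:=A) (B:=B) [::] p = 0.
Proof. by rewrite /fcoef big_nil. Qed.

Lemma fcoef_cons c q (s : fsum A B) p :
  fcoef ((c, q) :: s) p = (q == p)%:R * c + fcoef s p.
Proof. by rewrite /fcoef big_cons /=; case: eqP => _; rewrite ?mul1r ?mul0r ?add0r. Qed.

Lemma fcoef_cat (s t : fsum A B) p : fcoef (s ++ t) p = fcoef s p + fcoef t p.
Proof. by rewrite /fcoef big_cat. Qed.

Lemma fcoef_scale n (s : fsum A B) p : fcoef (fscale n s) p = n * fcoef s p.
Proof. by rewrite /fcoef /fscale big_map /= mulr_sumr. Qed.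

Lemma fcoef_w (w : A * B -> int) (s : fsum A B) (u : seq (A * B)) :
  uniq u -> (forall q, q \in s -> q.2 \in u) ->
  \sum_(q <- s) w q.2 * q.1 = \sum_(p <- u) w p * fcoef s p.
Proof.
move=> Uu; elim: s => [|[c q] s IH] Hs.
  by rewrite big_nil; under eq_bigr do rewrite fcoef_nil mulr0; rewrite big1.
rewrite big_cons IH; last by move=> q' Hq'; apply: Hs; rewrite in_cons Hq' orbT.
under [RHS]eq_bigr do rewrite fcoef_cons mulrDr.
rewrite big_split /=; congr (_ + _).
have Hq : q \in u by apply: (Hs (c, q)); rewrite in_cons eqxx.
rewrite (bigD1_seq q) //= eqxx mul1r big1 ?addr0 // => p Hp.
by rewrite eq_sym (negbTE Hp) mul0r mulr0.
Qed.

Lemma fcoef_weq (w : A * B -> int) (s t : fsum A B) :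
  (forall p, fcoef s p = fcoef t p) ->
  \sum_(q <- s) w q.2 * q.1 = \sum_(q <- t) w q.2 * q.1.
Proof.
move=> H; set u := undup (map snd (s ++ t)).
have Uu : uniq u by apply: undup_uniq.
rewrite (@fcoef_w w s u) // ?(@fcoef_w w t u) //.
- by apply: eq_bigr => p _; rewrite H.
- by move=> q Hq; rewrite mem_undup map_f // mem_cat Hq orbT.
- by move=> q Hq; rewrite mem_undup map_f // mem_cat Hq.
Qed.

Lemma T_cat s t : T s -> T t -> T (s ++ t). Proof. exact: trel_add. Qed.
Lemma T_scale n s : T s -> T (fscale n s). Proof. exact: trel_scale. Qed.

Lemma T_zero_l (b : B) : T [:: (1, (0, b))].
Proof.
have := trel_addl ra la 0 0 b; rewrite addr0 => H.
apply: (trel_eq _ (trel_scale (-1) H)) => p.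
rewrite fcoef_scale !fcoef_cons !fcoef_nil; ring.
Qed.

Lemma T_zero_r (a : A) : T [:: (1, (a, 0))].
Proof.
have := trel_addr ra la a 0 0; rewrite addr0 => H.
apply: (trel_eq _ (trel_scale (-1) H)) => p.
rewrite fcoef_scale !fcoef_cons !fcoef_nil; ring.
Qed.

Lemma Ln_l (a : A) (b : B) (n : nat) : T [:: (1, (a *+ n, b)); (- (n%:Z), (a, b))].
Proof.
elim: n => [|n IH].
  apply: (trel_eq _ (T_zero_l b)) => p; rewrite mulr0n !fcoef_cons !fcoef_nil; ring.
have H := trel_addl ra la a (a *+ n) b.
apply: (trel_eq _ (T_cat H IH)) => p.
rewrite mulrS intS fcoef_cat !fcoef_cons !fcoef_nil; ring.
Qed.

Lemma Lz_l (a : A) (b : B) (m : int) : T [:: (1, (a *~ m, b)); (- m, (a, b))].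
Proof.
case: m => n; first by rewrite -pmulrn; apply: Ln_l.
have H := trel_addl ra la (a *+ n.+1) (- (a *+ n.+1)) b.
rewrite subrr in H.
have H2 := T_cat (T_cat (T_scale (-1) H) (T_zero_l b)) (T_scale (-1) (Ln_l a b n.+1)).
apply: (trel_eq _ H2) => p.
rewrite NegzE mulrNz pmulrn !fcoef_cat !fcoef_scale !fcoef_cons !fcoef_nil; ring.
Qed.

Lemma Ln_r (a : A) (b : B) (n : nat) : T [:: (1, (a, b *+ n)); (- (n%:Z), (a, b))].
Proof.
elim: n => [|n IH].
  apply: (trel_eq _ (T_zero_r a)) => p; rewrite mulr0n !fcoef_cons !fcoef_nil; ring.
have H := trel_addr ra la a b (b *+ n).
apply: (trel_eq _ (T_cat H IH)) => p.
rewrite mulrS intS fcoef_cat !fcoef_cons !fcoef_nil; ring.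
Qed.

Lemma Lz_r (a : A) (b : B) (m : int) : T [:: (1, (a, b *~ m)); (- m, (a, b))].
Proof.
case: m => n; first by rewrite -pmulrn; apply: Ln_r.
have H := trel_addr ra la a (b *+ n.+1) (- (b *+ n.+1)).
rewrite subrr in H.
have H2 := T_cat (T_cat (T_scale (-1) H) (T_zero_r a)) (T_scale (-1) (Ln_r a b n.+1)).
apply: (trel_eq _ H2) => p.
rewrite NegzE mulrNz pmulrn !fcoef_cat !fcoef_scale !fcoef_cons !fcoef_nil; ring.
Qed.

End Gen.
Definition gmap (A B A' B' : zmodType) (G : A * B -> A' * B') (s : fsum A B) : fsum A' B' :=
  map (fun q => (q.1, G q.2)) s.

Section Map.
Variables (K K' : Type) (A B A' B' : zmodType) (ra : A -> K -> A) (la : K -> B -> B)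
  (ra' : A' -> K' -> A') (la' : K' -> B' -> B') (G : A * B -> A' * B').
Hypothesis Hl : forall a1 a2 b,
  tensor_rel ra' la' [:: (1, G (a1 + a2, b)); (-1, G (a1, b)); (-1, G (a2, b))].
Hypothesis Hr : forall a b1 b2,
  tensor_rel ra' la' [:: (1, G (a, b1 + b2)); (-1, G (a, b1)); (-1, G (a, b2))].
Hypothesis Hb : forall a k b,
  tensor_rel ra' la' [:: (1, G (ra a k, b)); (-1, G (a, la k b))].

Lemma fcoef_gmap s p : fcoef (gmap G s) p = \sum_(q <- s) (G q.2 == p)%:R * q.1.
Proof.
rewrite /fcoef /gmap big_map big_mkcond /=; apply: eq_bigr => q _.
by case: eqP; rewrite ?mul1r ?mul0r.
Qed.

Lemma T_map s : tensor_rel ra la s -> tensor_rel ra' la' (gmap G s).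
Proof.
elim => //=.
- exact: trel_zero.
- by move=> s1 t1 _ H1 _ H2; rewrite /gmap map_cat; apply: trel_add.
- move=> n s1 _ H1; have -> : gmap G (fscale n s1) = fscale n (gmap G s1).
    by rewrite /gmap /fscale -!map_comp.
  exact: trel_scale.
- move=> s1 t1 Hc _ H; apply: (trel_eq _ H) => p.
  rewrite !fcoef_gmap; exact: (fcoef_weq (fun q => (G q == p)%:R) Hc).
Qed.
End Map.

Lemma gmap_cat (A B A' B' : zmodType) (G : A * B -> A' * B') s t :
  gmap G (s ++ t) = gmap G s ++ gmap G t.
Proof. by rewrite /gmap map_cat. Qed.
Lemma gmap_scale (A B A' B' : zmodType) (G : A * B -> A' * B') n s :
  gmap G (fscale n s) = fscale n (gmap G s).
Proof. by rewrite /gmap /fscale -!map_comp. Qed.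
Lemma fscale_cons (A B : zmodType) c n (q : A * B) s :
  fscale c ((n, q) :: s) = (c * n, q) :: fscale c s.
Proof. by []. Qed.

Lemma fmu_nil (A B C : zmodType) (mu : A -> B -> C) : fmu mu [::] = 0.
Proof. by rewrite /fmu big_nil. Qed.
Lemma fmu_cons (A B C : zmodType) (mu : A -> B -> C) c q s :
  fmu mu ((c, q) :: s) = mu q.1 q.2 *~ c + fmu mu s.
Proof. by rewrite /fmu big_cons. Qed.
Lemma fmu_cat (A B C : zmodType) (mu : A -> B -> C) s t :
  fmu mu (s ++ t) = fmu mu s + fmu mu t.
Proof. by rewrite /fmu big_cat. Qed.
Lemma fmu_scale (A B C : zmodType) (mu : A -> B -> C) n s :
  fmu mu (fscale n s) = fmu mu s *~ n.
Proof.
rewrite /fmu /fscale big_map mulrz_suml; apply: eq_bigr => q _ /=.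
by rewrite mulrzA mulrzAC.
Qed.

Section Addf.
Variables (M N : zmodType) (h : M -> N).
Hypothesis Hh : forall x y, h (x + y) = h x + h y.
Lemma addf0 : h 0 = 0.
Proof. by apply: (addrI (h 0)); rewrite -Hh !addr0. Qed.
Lemma addfN x : h (- x) = - h x.
Proof. by apply: (addrI (h x)); rewrite -Hh !subrr addf0. Qed.
Lemma addfn x n : h (x *+ n) = h x *+ n.
Proof. by elim: n => [|n IH]; rewrite ?mulr0n ?addf0 // !mulrS Hh IH. Qed.
Lemma addfz x m : h (x *~ m) = h x *~ m.
Proof.
case: m => n; first by rewrite -!pmulrn addfn.
by rewrite !NegzE !mulrNz -!pmulrn addfN addfn.
Qed.
Lemma addf_sum (I : Type) (r : seq I) (F : I -> M) :
  h (\sum_(i <- r) F i) = \sum_(i <- r) h (F i).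
Proof. by elim: r => [|i r IH]; rewrite ?big_nil ?addf0 // !big_cons Hh IH. Qed.
End Addf.

Section Left.
Variables (K R : nuring) (f : K -> R).
Hypothesis Hadd : forall x y, f (x + y) = f x + f y.
Hypothesis Hmul : forall x y, f (nu_mul x y) = nu_mul (f x) (f y).
Let muK := fun (k : K) (r : R) => nu_mul (f k) r.
Let gl := fun p : K * R => (f p.1, p.2).
Local Notation TR := (tensor_rel (@nu_mul R) (@nu_mul R)).
Let dl (y : R) (t : fsum K R) : fsum K R :=
  map (fun q => (q.1, (q.2.1, nu_mul q.2.2 y))) t.

Lemma fmu_dl y t : fmu muK (dl y t) = nu_mul (fmu muK t) y.
Proof.
rewrite /fmu /dl big_map (addf_sum (h := fun x => nu_mul x y)); last by move=> *; apply: nu_mulDl.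
apply: eq_bigr => q _ /=.
rewrite (addfz (h := fun x => nu_mul x y)); last by move=> *; apply: nu_mulDl.
by rewrite /muK nu_mulA.
Qed.

Lemma Dx y t : TR (gmap gl (dl y t) ++ [:: (-1, (fmu muK t, y))]).
Proof.
elim: t => [|[m [k r]] t IH].
  rewrite fmu_nil /=.
  apply: (trel_eq _ (trel_scale (-1) (T_zero_l (@nu_mul R) (@nu_mul R) y))) => p.
  rewrite fcoef_scale !fcoef_cons !fcoef_nil; ring.
rewrite fmu_cons /=.
have H1 := trel_addl (@nu_mul R) (@nu_mul R) (muK k r *~ m) (fmu muK t) y.
have H3 := Lz_l (@nu_mul R) (@nu_mul R) (nu_mul (f k) r) y m.
have H4 := trel_bal (@nu_mul R) (@nu_mul R) (f k) r y.
have H := T_cat (T_scale (-1) H1) (T_cat IH (T_cat (T_scale (-1) H3) (T_scale (-m) H4))).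
apply: (trel_eq _ H) => p.
rewrite /muK !fcoef_cat !fcoef_scale !fcoef_cons !fcoef_cat !fcoef_cons !fcoef_nil; ring.
Qed.

Hypothesis Hsurj : forall x : R, exists t, fmu muK t = x.

Lemma decomp_l s : exists t, fmu muK t = fmu (@nu_mul R) s /\
  TR (gmap gl t ++ fscale (-1) s).
Proof.
elim: s => [|[n [x y]] s [t0 [E0 T0]]].
  by exists [::]; split; [rewrite !fmu_nil | exact: trel_zero].
have [tx Ex] := Hsurj x.
exists (fscale n (dl y tx) ++ t0); split.
  by rewrite fmu_cat fmu_scale fmu_dl Ex E0 fmu_cons.
have H := T_cat (T_scale n (Dx y tx)) T0; rewrite Ex in H.
apply: (trel_eq _ H) => p.
rewrite !gmap_cat !gmap_scale fscale_cons !fcoef_cat !fcoef_scale !fcoef_cons !fcoef_cat !fcoef_cons !fcoef_nil ?fcoef_scale; ring.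
Qed.
End Left.

Lemma left_case (K R : nuring) (f : K -> R) :
  nu_hom f -> left_tunital_hom f -> tunital_ring R.
Proof.
move=> [Hadd Hmul] [Hs Hi]; split.
  move=> c; have [t Et] := Hs c; exists (gmap (fun p : K * R => (f p.1, p.2)) t).
  by rewrite -Et /fmu /gmap big_map.
move=> s Hs0.
have [t [Et Tt]] := decomp_l Hs s.
rewrite Hs0 in Et.
have TK := Hi t Et.
have TRt : tensor_rel (@nu_mul R) (@nu_mul R) (gmap (fun p : K * R => (f p.1, p.2)) t).
  apply: (T_map (ra := @nu_mul K) (la := fun k r => nu_mul (f k) r)) TK.
  - by move=> a1 a2 b /=; rewrite Hadd; apply: trel_addl.
  - by move=> a b1 b2 /=; apply: trel_addr.
  - by move=> a k b /=; rewrite Hmul; apply: trel_bal.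
have H := T_cat TRt (T_scale (-1) Tt).
apply: (trel_eq _ H) => p.
rewrite !fcoef_cat !fcoef_scale fcoef_cat fcoef_scale; ring.
Qed.

Section Right.
Variables (K R : nuring) (f : K -> R).
Let muK := fun (r : R) (k : K) => nu_mul r (f k).
Let gr := fun p : R * K => (p.1, f p.2).
Local Notation TR := (tensor_rel (@nu_mul R) (@nu_mul R)).
Let dr (x : R) (t : fsum R K) : fsum R K :=
  map (fun q => (q.1, (nu_mul x q.2.1, q.2.2))) t.

Lemma fmu_dr x t : fmu muK (dr x t) = nu_mul x (fmu muK t).
Proof.
rewrite /fmu /dr big_map (addf_sum (h := fun y => nu_mul x y)); last by move=> *; apply: nu_mulDr.
apply: eq_bigr => q _ /=.
rewrite (addfz (h := fun y => nu_mul x y)); last by move=> *; apply: nu_mulDr.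
by rewrite /muK nu_mulA.
Qed.

Lemma Dy x t : TR (gmap gr (dr x t) ++ [:: (-1, (x, fmu muK t))]).
Proof.
elim: t => [|[m [r k]] t IH].
  rewrite fmu_nil /=.
  apply: (trel_eq _ (trel_scale (-1) (T_zero_r (@nu_mul R) (@nu_mul R) x))) => p.
  rewrite fcoef_scale !fcoef_cons !fcoef_nil; ring.
rewrite fmu_cons /=.
have H1 := trel_addr (@nu_mul R) (@nu_mul R) x (muK r k *~ m) (fmu muK t).
have H3 := Lz_r (@nu_mul R) (@nu_mul R) x (nu_mul r (f k)) m.
have H4 := trel_bal (@nu_mul R) (@nu_mul R) x r (f k).
have H := T_cat (T_scale (-1) H1) (T_cat IH (T_cat (T_scale (-1) H3) (T_scale m H4))).
apply: (trel_eq _ H) => p.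
rewrite /muK !fcoef_cat !fcoef_scale !fcoef_cons !fcoef_cat !fcoef_cons !fcoef_nil; rewrite /gr /=; ring.
Qed.

Hypothesis Hsurj : forall x : R, exists t, fmu muK t = x.

Lemma decomp_r s : exists t, fmu muK t = fmu (@nu_mul R) s /\
  TR (gmap gr t ++ fscale (-1) s).
Proof.
elim: s => [|[n [x y]] s [t0 [E0 T0]]].
  by exists [::]; split; [rewrite !fmu_nil | exact: trel_zero].
have [ty Ey] := Hsurj y.
exists (fscale n (dr x ty) ++ t0); split.
  by rewrite fmu_cat fmu_scale fmu_dr Ey E0 fmu_cons.
have H := T_cat (T_scale n (Dy x ty)) T0; rewrite Ey in H.
apply: (trel_eq _ H) => p.
rewrite !gmap_cat !gmap_scale fscale_cons !fcoef_cat !fcoef_scale !fcoef_cons !fcoef_cat !fcoef_cons !fcoef_nil ?fcoef_scale; ring.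
Qed.
End Right.

Lemma right_case (K R : nuring) (f : K -> R) :
  nu_hom f -> right_tunital_hom f -> tunital_ring R.
Proof.
move=> [Hadd Hmul] [Hs Hi]; split.
  move=> c; have [t Et] := Hs c; exists (gmap (fun p : R * K => (p.1, f p.2)) t).
  by rewrite -Et /fmu /gmap big_map.
move=> s Hs0.
have [t [Et Tt]] := decomp_r Hs s.
rewrite Hs0 in Et.
have TK := Hi t Et.
have TRt : tensor_rel (@nu_mul R) (@nu_mul R) (gmap (fun p : R * K => (p.1, f p.2)) t).
  apply: (T_map (ra := fun r k => nu_mul r (f k)) (la := @nu_mul K)) TK.
  - by move=> a1 a2 b /=; apply: trel_addl.
  - by move=> a b1 b2 /=; rewrite Hadd; apply: trel_addr.
  - by move=> a k b /=; rewrite Hmul; apply: trel_bal.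
have H := T_cat TRt (T_scale (-1) Tt).
apply: (trel_eq _ H) => p.
rewrite !fcoef_cat !fcoef_scale fcoef_cat fcoef_scale; ring.
Qed.

Theorem proposition9p5 (K R : nuring) (f : K -> R) :
  nu_hom f -> (left_tunital_hom f \/ right_tunital_hom f) -> tunital_ring R.
Proof. by move=> Hf [H|H]; [apply: (left_case Hf) | apply: (right_case Hf)]. Qed.
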